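(* Let $\Delta_{\mathrm{MSE}}(\epsilon,B)$ be a real function of noise strength $\epsilon>0$ and shot budget $B>0$, and suppose that in a neighborhood of $\epsilon=0$ \[ \Delta_{\mathrm{MSE}}(\epsilon,B)=D_p\epsilon^{2p}-\frac{K_q\epsilon^q}{B}+R_p(\epsilon,B), \] with $D_p>0$, $K_q>0$, $p\ge1$, $q\ge0$, where the remainder satisfies $R_p(\epsilon,B)=O(\epsilon^{2p+\delta_b})+O(\epsilon^{q+\delta_v}/B)$ for some $\delta_b,\delta_v>0$ (uniformly in $B$), and, in case (i) below, with $r=1/(2p-q)$, the rescaled remainder $\eta_B(x)=B^{2pr}R_p(xB^{-r},B)$ and its $x$-derivative converge to $0$ uniformly on compact subsets of $(0,\infty)$ as $B\to\infty$. (i) If $0\le q<2p$, let $C_{p,q}=(K_q/D_p)^{1/(2p-q)}$. Then for any fixed $0<m<C_{p,q}<M<\infty$ and all sufficiently large $B$ there is a unique sign-changing local crossing $\epsilon^*_{\mathrm{loc}}(B)$ of $\Delta_{\mathrm{MSE}}(\cdot,B)$ in the window $\{xB^{-1/(2p-q)}:x\in[m,M]\}$, and \[ \frac{\epsilon^*_{\mathrm{loc}}(B)}{C_{p,q}B^{-1/(2p-q)}}\to1\qquad(B\to\infty). \] Moreover, for $\epsilon=xB^{-1/(2p-q)}$ with $x$ ranging in any compact subset of $(0,\infty)$ not containing $C_{p,q}$, for all sufficiently large $B$ one has $\Delta_{\mathrm{MSE}}(\epsilon,B)<0$ when $x<C_{p,q}$ and $\Delta_{\mathrm{MSE}}(\epsilon,B)>0$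 when $x>C_{p,q}$. If the convergence of $\eta_B$ and $\eta_B'$ holds at rate $O(B^{-\eta})$, then \[ \epsilon^*_{\mathrm{loc}}(B)=C_{p,q}B^{-1/(2p-q)}\left[1+O(B^{-\eta})\right]. \] (ii) If $q=2p$, then $\Delta_{\mathrm{MSE}}(\epsilon,B)=(D_p-K_q/B)\epsilon^{2p}+o(\epsilon^{2p})$, so no lower boundary $\epsilon^*(B)\to0$ arises from the leading balance; with $B^*=K_q/D_p$, for $B>B^*$ one has $\Delta_{\mathrm{MSE}}(\epsilon,B)>0$ for all sufficiently small $\epsilon>0$, and for $B<B^*$ one has $\Delta_{\mathrm{MSE}}(\epsilon,B)<0$ for all sufficiently small $\epsilon>0$ (the case $B=B^*$ being decided by higher-order terms). (iii) If $q>2p$, then for each sufficiently large fixed $B$, $\Delta_{\mathrm{MSE}}(\epsilon,B)>0$ for all sufficiently small $\epsilon>0$ (unless higher-order terms outside the displayed leading balance change the sign); in particular no leading-order shrinking lower boundary arises.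
   Context: In the application, $\Delta_{\mathrm{MSE}}(\epsilon,B)=\mathrm{MSE}_{\mathrm{noisy}}(\epsilon,B)-\mathrm{MSE}_{\mathrm{ZNE}}(\epsilon,B)$, the difference of mean-squared errors $\mathbb E[(\widehat\mu-\mu_0)^2]$ (about the ideal value $\mu_0$) of an unmitigated estimator and a zero-noise-extrapolation estimator, each using total shot budget $B$ at physical noise strength $\epsilon$; $\Delta_{\mathrm{MSE}}>0$ means ZNE helps. $D_p\epsilon^{2p}$ is the leading squared-bias improvement and $K_q\epsilon^q/B$ the leading excess-variance penalty. A ''sign-changing local crossing'' is a zero of $\Delta_{\mathrm{MSE}}(\cdot,B)$ across which it changes sign. *)

(* Defs.v *)
From Stdlib Require Import Reals.
From Coquelicot Require Import Coquelicot.
Open Scope R_scope.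

Definition leading (D K p q eps B : R) : R :=
  D * Rpower eps (2 * p) - K * Rpower eps q / B.

Definition remainder (Delta : R -> R -> R) (D K p q eps B : R) : R :=
  Delta eps B - leading D K p q eps B.

Definition rexp (p q : R) : R := / (2 * p - q).

Definition eta_resc (Delta : R -> R -> R) (D K p q B x : R) : R :=
  Rpower B (2 * p * rexp p q) *
    remainder Delta D K p q (x * Rpower B (- rexp p q)) B.

Definition Cpq (D K p q : R) : R := Rpower (K / D) (rexp p q).

Definition sign_changing_crossing (f : R -> R) (e : R) : Prop :=
  f e = 0 /\
  exists d, 0 < d /\
    ((forall t, e - d < t < e -> f t < 0) /\ (forall t, e < t < e + d -> 0 < f t)
     \/ (forall t, e - d < t < e -> 0 < f t) /\ (forall t, e < t < e + d -> f t < 0)).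

(* Main.v *)
Require Import Defs.
From Stdlib Require Import Reals Lra IndefiniteDescription.
From Coquelicot Require Import Coquelicot.
Open Scope R_scope.

Lemma Rpower_pos x y : 0 < Rpower x y.
Proof. unfold Rpower; apply exp_pos. Qed.

Lemma Rpower_invB B : 0 < B -> / B = Rpower B (-1).
Proof. intros HB. replace (-1) with (-(1)) by ring. rewrite Rpower_Ropp, Rpower_1; auto. Qed.

Definition gl (D K p q x : R) := D * Rpower x (2*p) - K * Rpower x q.

Lemma scale_id Delta D K p q B x : 0 < B -> 0 < x -> q < 2*p ->
  Rpower B (2*p*rexp p q) * Delta (x*Rpower B (-rexp p q)) B =
  gl D K p q x + eta_resc Delta D K p q B x.
Proof.
  intros HB Hx Hqp.
  unfold eta_resc, remainder, leading, gl.
  set (r := rexp p q). set (s := Rpower B (-r)).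
  assert (Hs : 0 < s) by apply Rpower_pos.
  rewrite <- !Rpower_mult_distr by auto.
  unfold s; rewrite !Rpower_mult.
  unfold Rdiv; rewrite (Rpower_invB B HB).
  assert (E1 : Rpower B (2*p*r) * Rpower B (- r * (2*p)) = 1).
  { rewrite <- Rpower_plus. replace (2*p*r + -r*(2*p)) with 0 by ring.
    apply Rpower_O; auto. }
  assert (E2 : Rpower B (2*p*r) * Rpower B (- r * q) * Rpower B (-1) = 1).
  { rewrite <- !Rpower_plus. replace (2*p*r + -r*q + -1) with 0.
    apply Rpower_O; auto. unfold r, rexp. field. lra. }
  unfold Rdiv.
  set (P := Rpower B (2*p*r)) in *.
  set (a := Rpower B (- r * (2 * p))) in *.
  set (b := Rpower B (- r * q)) in *.
  set (c := Rpower B (-1)) in *.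
  assert (L : P * (D * (Rpower x (2 * p) * a) - K * (Rpower x q * b) * c)
     = D * Rpower x (2 * p) - K * Rpower x q).
  { replace (P * (D * (Rpower x (2 * p) * a) - K * (Rpower x q * b) * c)) with
     (D * Rpower x (2 * p) * (P * a) - K * Rpower x q * (P * b * c)) by ring.
    rewrite E1, E2; ring. }
  rewrite <- L. ring.
Qed.

Lemma slope f f' a b c :
  (forall x, a <= x <= b -> is_derive f x (f' x)) ->
  (forall x, a <= x <= b -> c <= f' x) ->
  forall x y, a <= x -> x <= y -> y <= b -> c * (y - x) <= f y - f x.
Proof.
  intros Hd Hc x y Hax Hxy Hyb.
  destruct (Req_dec x y) as [E|NE].
  - subst; lra.
  - destruct (MVT_cor3 f f' x y) as [z [Hz1 [Hz2 Hz3]]]; [lra| |].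
    + intros t H1 H2. apply is_derive_Reals, Hd; lra.
    + rewrite Hz3. assert (c <= f' z) by (apply Hc; lra). nra.
Qed.

Definition gd (D K p q x : R) :=
  D * (2*p * Rpower x (2*p - 1)) - K * (q * Rpower x (q - 1)).

Lemma gl_derive D K p q x : 0 < x -> is_derive (gl D K p q) x (gd D K p q x).
Proof.
  intros Hx. unfold gl, gd.
  apply (is_derive_minus (fun x => D * Rpower x (2*p)) (fun x => K * Rpower x q));
  apply is_derive_scal; apply is_derive_Reals; apply derivable_pt_lim_power; auto.
Qed.

Lemma Rpower_small a eps : 0 < a -> 0 < eps ->
  forall e, 0 < e < Rpower eps (/a) -> Rpower e a < eps.
Proof.
  intros Ha He e [H1 H2].
  assert (H3 : Rpower e a < Rpower (Rpower eps (/a)) a) by (apply Rlt_Rpower_l; lra).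
  rewrite Rpower_mult, Rinv_l, Rpower_1 in H3; lra.
Qed.

Lemma Rpower_lt_base x y a : 0 < a -> 0 < x -> 0 < y -> Rpower x a < Rpower y a -> x < y.
Proof.
  intros Ha Hx Hy H. destruct (Rlt_le_dec x y) as [|L]; auto.
  destruct (Req_dec x y). subst; lra.
  assert (Rpower y a < Rpower x a) by (apply Rlt_Rpower_l; lra). lra.
Qed.

Lemma small a c eps : 0 < a -> 0 < eps ->
  exists e1, 0 < e1 /\ forall e, 0 < e < e1 -> Rabs c * Rpower e a < eps.
Proof.
  intros Ha He.
  assert (Hc : 0 < Rabs c + 1) by (pose proof (Rabs_pos c); lra).
  exists (Rpower (eps / (Rabs c + 1)) (/a)). split. apply Rpower_pos.
  intros e He1.
  assert (H := Rpower_small a (eps / (Rabs c + 1)) Ha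
      ltac:(apply Rdiv_lt_0_compat; lra) e He1).
  pose proof (Rpower_pos e a). pose proof (Rabs_pos c).
  apply Rmult_lt_compat_r with (r := Rabs c + 1) in H; [|lra].
  unfold Rdiv in H. rewrite Rmult_assoc, Rinv_l in H by lra. nra.
Qed.

Lemma rem_ratio Delta D K p q e0 Cb Cv db dv :
  (forall B eps, 0 < B -> 0 < eps < e0 ->
      Rabs (remainder Delta D K p q eps B)
        <= Cb * Rpower eps (2 * p + db) + Cv * Rpower eps (q + dv) / B) ->
  forall B eps, 0 < B -> 0 < eps < e0 ->
  Rabs (remainder Delta D K p q eps B / Rpower eps (2*p)) <=
    Rabs Cb * Rpower eps db + Rabs Cv * Rpower eps (q - 2*p + dv) / B.
Proof.
  intros Hb B eps HB He.
  pose proof (Rpower_pos eps (2*p)) as P.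
  specialize (Hb B eps HB He).
  rewrite Rpower_plus in Hb.
  replace (q + dv) with (2*p + (q - 2*p + dv)) in Hb by ring.
  rewrite Rpower_plus in Hb.
  unfold Rdiv. rewrite Rabs_mult, Rabs_inv, (Rabs_right (Rpower eps (2*p))) by lra.
  pose proof (Rpower_pos eps db). pose proof (Rpower_pos eps (q - 2*p + dv)).
  assert (Cb <= Rabs Cb) by apply Rle_abs.
  assert (Cv <= Rabs Cv) by apply Rle_abs.
  pose proof (Rinv_0_lt_compat B HB).
  apply Rmult_le_reg_r with (r := Rpower eps (2*p)); auto.
  rewrite Rmult_assoc, Rinv_l by lra. rewrite Rmult_1_r.
  eapply Rle_trans; [apply Hb|].
  set (P0 := Rpower eps (2*p)) in *.
  set (a0 := Rpower eps db) in *. set (b0 := Rpower eps (q - 2*p + dv)) in *.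
  assert (Cb * (P0 * a0) <= Rabs Cb * (P0 * a0)) by (apply Rmult_le_compat_r; nra).
  assert (Cv * (P0 * b0 * / B) <= Rabs Cv * (P0 * b0 * / B))
    by (apply Rmult_le_compat_r; [apply Rmult_le_pos; nra | lra]).
  unfold Rdiv. nra.
Qed.

Lemma case_ii Delta D K p q db dv
  (HD : 0 < D) (HK : 0 < K) (Hdb : 0 < db) (Hdv : 0 < dv)
  (Hrem : exists e0 Cb Cv, 0 < e0 /\ forall B eps, 0 < B -> 0 < eps < e0 ->
      Rabs (remainder Delta D K p q eps B)
        <= Cb * Rpower eps (2 * p + db) + Cv * Rpower eps (q + dv) / B) :
  (q = 2 * p ->
   (forall B, 0 < B ->
      filterlim (fun eps => (Delta eps B - (D - K / B) * Rpower eps (2 * p))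
                          / Rpower eps (2 * p)) (at_right 0) (locally 0)) /\
   (forall B, K / D < B ->
      exists e0, 0 < e0 /\ forall eps, 0 < eps < e0 -> 0 < Delta eps B) /\
   (forall B, 0 < B -> B < K / D ->
      exists e0, 0 < e0 /\ forall eps, 0 < eps < e0 -> Delta eps B < 0)).
Proof.
  intros Hq. destruct Hrem as [e0 [Cb [Cv [He0 Hb]]]].
  pose proof (rem_ratio Delta D K p q e0 Cb Cv db dv Hb) as RR.
  assert (EQ : forall B eps, 0 < B ->
    (Delta eps B - (D - K / B) * Rpower eps (2 * p)) = remainder Delta D K p q eps B).
  { intros B eps HB. unfold remainder, leading. rewrite Hq. field. lra. }
  assert (SM : forall B ep, 0 < B -> 0 < ep -> exists d, 0 < d /\ forall eps, 0 < eps < d ->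
     Rabs (remainder Delta D K p q eps B / Rpower eps (2*p)) < ep).
  { intros B ep HB Hep.
    destruct (small db Cb (ep/2) Hdb ltac:(lra)) as [e1 [He1 H1]].
    destruct (small dv Cv (ep*B/2) Hdv ltac:(nra)) as [e2 [He2 H2]].
    exists (Rmin e0 (Rmin e1 e2)). split.
    { apply Rmin_pos; auto. apply Rmin_pos; auto. }
    intros eps [Hp1 Hp2].
    assert (eps < e0) by (eapply Rlt_le_trans; [apply Hp2| apply Rmin_l]).
    assert (eps < e1) by (eapply Rlt_le_trans; [apply Hp2| eapply Rle_trans; [apply Rmin_r|apply Rmin_l]]).
    assert (eps < e2) by (eapply Rlt_le_trans; [apply Hp2| eapply Rle_trans; [apply Rmin_r|apply Rmin_r]]).
    eapply Rle_lt_trans; [apply RR; auto; lra|].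
    rewrite Hq. replace (2*p - 2*p + dv) with dv by ring.
    specialize (H1 eps ltac:(lra)). specialize (H2 eps ltac:(lra)).
    assert (Rabs Cv * Rpower eps dv / B < ep / 2).
    { apply Rmult_lt_reg_r with (r := B); auto. unfold Rdiv.
      rewrite Rmult_assoc, Rinv_l by lra. lra. }
    lra. }
  split; [|split].
  - intros B HB. apply filterlim_locally. intros ep.
    destruct (SM B ep HB (cond_pos ep)) as [d [Hd Hd2]].
    exists (mkposreal d Hd). intros y Hy Hy0.
    change (Rabs (y - 0) < d) in Hy.
    change (Rabs ((Delta y B - (D - K / B) * Rpower y (2 * p)) / Rpower y (2 * p) - 0) < ep).
    rewrite EQ by auto. rewrite Rminus_0_r.
    apply Hd2. rewrite Rminus_0_r in Hy. apply Rabs_def2 in Hy. lra.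
  - intros B HB.
    assert (HB0 : 0 < B) by (eapply Rlt_trans; [|apply HB]; apply Rdiv_lt_0_compat; auto).
    assert (Hpos : 0 < D - K / B).
    { apply Rmult_lt_compat_r with (r := D) in HB; auto. unfold Rdiv in HB.
      rewrite Rmult_assoc, Rinv_l in HB by lra.
      assert (K / B < D). { apply Rmult_lt_reg_r with (r := B); auto. unfold Rdiv.
      rewrite Rmult_assoc, Rinv_l by lra. lra. } lra. }
    destruct (SM B (D - K/B) HB0 Hpos) as [d [Hd Hd2]].
    exists d. split; auto. intros eps He.
    specialize (Hd2 eps He). apply Rabs_def2 in Hd2.
    pose proof (Rpower_pos eps (2*p)) as P.
    assert (E : Delta eps B = Rpower eps (2*p) * ((D - K/B) + remainder Delta D K p q eps B / Rpower eps (2*p))).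
    { rewrite <- (EQ B eps HB0). field. lra. }
    rewrite E. apply Rmult_lt_0_compat; lra.
  - intros B HB0 HB.
    assert (Hneg : 0 < K / B - D).
    { apply Rmult_lt_compat_r with (r := D) in HB; auto. unfold Rdiv in HB.
      rewrite Rmult_assoc, Rinv_l in HB by lra.
      assert (D < K / B). { apply Rmult_lt_reg_r with (r := B); auto. unfold Rdiv.
      rewrite Rmult_assoc, Rinv_l by lra. lra. } lra. }
    destruct (SM B (K/B - D) HB0 Hneg) as [d [Hd Hd2]].
    exists d. split; auto. intros eps He.
    specialize (Hd2 eps He). apply Rabs_def2 in Hd2.
    pose proof (Rpower_pos eps (2*p)) as P.
    assert (E : Delta eps B = Rpower eps (2*p) * ((D - K/B) + remainder Delta D K p q eps B / Rpower eps (2*p))).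
    { rewrite <- (EQ B eps HB0). field. lra. }
    rewrite E. assert (0 < Rpower eps (2*p) * (- ((D - K/B) + remainder Delta D K p q eps B / Rpower eps (2*p)))) by (apply Rmult_lt_0_compat; lra).
    lra.
Qed.

Lemma case_iii Delta D K p q db dv
  (HD : 0 < D) (HK : 0 < K) (Hdb : 0 < db) (Hdv : 0 < dv)
  (Hrem : exists e0 Cb Cv, 0 < e0 /\ forall B eps, 0 < B -> 0 < eps < e0 ->
      Rabs (remainder Delta D K p q eps B)
        <= Cb * Rpower eps (2 * p + db) + Cv * Rpower eps (q + dv) / B) :
  (2 * p < q ->
   exists B0, forall B, B0 <= B ->
     exists e0, 0 < e0 /\ forall eps, 0 < eps < e0 -> 0 < Delta eps B).
Proof.
  intros Hq. destruct Hrem as [e0 [Cb [Cv [He0 Hb]]]].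
  pose proof (rem_ratio Delta D K p q e0 Cb Cv db dv Hb) as RR.
  exists 1. intros B HB.
  destruct (small db Cb (D/3) Hdb ltac:(lra)) as [e1 [He1 H1]].
  destruct (small (q - 2*p + dv) Cv (D/3) ltac:(lra) ltac:(lra)) as [e2 [He2 H2]].
  destruct (small (q - 2*p) K (D/3) ltac:(lra) ltac:(lra)) as [e3 [He3 H3]].
  exists (Rmin e0 (Rmin e1 (Rmin e2 e3))). split.
  { repeat (apply Rmin_pos; auto). }
  intros eps [Hp1 Hp2].
  pose proof (Rmin_l e0 (Rmin e1 (Rmin e2 e3))).
  pose proof (Rmin_r e0 (Rmin e1 (Rmin e2 e3))).
  pose proof (Rmin_l e1 (Rmin e2 e3)). pose proof (Rmin_r e1 (Rmin e2 e3)).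
  pose proof (Rmin_l e2 e3). pose proof (Rmin_r e2 e3).
  specialize (H1 eps ltac:(lra)). specialize (H2 eps ltac:(lra)). specialize (H3 eps ltac:(lra)).
  specialize (RR B eps ltac:(lra) ltac:(lra)).
  rewrite Rabs_right in H3 by lra.
  pose proof (Rpower_pos eps (2*p)) as P.
  pose proof (Rpower_pos eps (q - 2*p)) as P2.
  pose proof (Rpower_pos eps (q - 2*p + dv)) as P3.
  pose proof (Rabs_pos Cv).
  assert (A1 : Rabs Cv * Rpower eps (q - 2 * p + dv) / B <= Rabs Cv * Rpower eps (q - 2 * p + dv)).
  { unfold Rdiv. rewrite <- (Rmult_1_r (Rabs Cv * Rpower eps (q - 2 * p + dv))) at 2.
    apply Rmult_le_compat_l. nra. rewrite <- Rinv_1. apply Rinv_le_contravar; lra. }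
  assert (A2 : K * Rpower eps (q - 2 * p) / B <= K * Rpower eps (q - 2 * p)).
  { unfold Rdiv. rewrite <- (Rmult_1_r (K * Rpower eps (q - 2 * p))) at 2.
    apply Rmult_le_compat_l. nra. rewrite <- Rinv_1. apply Rinv_le_contravar; lra. }
  pose proof (Rle_abs (- (remainder Delta D K p q eps B / Rpower eps (2 * p)))) as RR2; rewrite Rabs_Ropp in RR2.
  assert (E : Delta eps B = Rpower eps (2*p) * (D - K * Rpower eps (q - 2*p) / B
       + remainder Delta D K p q eps B / Rpower eps (2*p))).
  { unfold remainder, leading.
    assert (Eq : Rpower eps q = Rpower eps (2*p) * Rpower eps (q - 2*p)).
    { rewrite <- Rpower_plus. f_equal. ring. }
    rewrite Eq. field. lra. }
  rewrite E. apply Rmult_lt_0_compat; [lra|]. set (X := remainder Delta D K p q eps B / Rpower eps (2 * p)) in *. set (k := K * Rpower eps (q - 2 * p) / B) in *. set (bb := Rabs Cv * Rpower eps (q - 2 * p + dv) / B) in *. lra.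
Qed.

Lemma abs_le x e : Rabs x <= e -> - e <= x <= e.
Proof. unfold Rabs; destruct Rcase_abs; lra. Qed.

Lemma core (g g' : R -> R) (eta : R -> R -> R) (m a1 M C c0 cd B0 : R) :
  m <= a1 -> a1 < C -> C < M -> 0 < c0 -> 0 < cd ->
  (forall x, m <= x <= a1 -> g x <= - c0) ->
  (forall x, a1 <= x <= M -> is_derive g x (g' x) /\ cd <= g' x) ->
  g C = 0 -> c0 <= g M ->
  (forall B x, B0 <= B -> m <= x <= M ->
     Rabs (eta B x) <= Rmin c0 cd / 2 /\ ex_derive (eta B) x /\
     Rabs (Derive (eta B) x) <= Rmin c0 cd / 2) ->
  exists xB : R -> R, forall B, B0 <= B ->
    a1 < xB B < M /\ g (xB B) + eta B (xB B) = 0 /\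
    (forall y z, a1 <= y -> y < z -> z <= M -> g y + eta B y < g z + eta B z) /\
    (forall z, m <= z <= a1 -> g z + eta B z < 0) /\
    (forall z, m <= z <= M -> g z + eta B z = 0 -> z = xB B) /\
    cd * Rabs (xB B - C) <= Rabs (eta B (xB B)).
Proof.
  intros Hma1 Ha1C HCM Hc0 Hcd Hneg Hder HgC HgM Heta.
  pose proof (Rmin_l c0 cd) as Mn1. pose proof (Rmin_r c0 cd) as Mn2.
  pose proof (Rmin_glb_lt c0 cd 0 Hc0 Hcd) as Mn3.
  assert (HD : forall B, B0 <= B -> forall x, a1 <= x <= M ->
     is_derive (fun x => g x + eta B x) x (g' x + Derive (eta B) x) /\
     cd / 2 <= g' x + Derive (eta B) x).
  { intros B HB x Hx. destruct (Hder x Hx) as [H1 H2].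
    destruct (Heta B x HB ltac:(lra)) as [_ [H3 H4]].
    split.
    - apply (is_derive_plus g (eta B)); auto. apply Derive_correct; auto.
    - apply abs_le in H4. lra. }
  assert (Hmono : forall B, B0 <= B -> forall y z, a1 <= y -> y < z -> z <= M ->
      g y + eta B y < g z + eta B z).
  { intros B HB y z H1 H2 H3.
    pose proof (slope (fun x => g x + eta B x) (fun x => g' x + Derive (eta B) x) a1 M (cd/2)
      (fun x Hx => proj1 (HD B HB x Hx)) (fun x Hx => proj2 (HD B HB x Hx)) y z H1 ltac:(lra) H3) as SL.
    simpl in SL. assert (0 < cd / 2 * (z - y)) by (apply Rmult_lt_0_compat; lra). lra. }
  assert (Hneg2 : forall B, B0 <= B -> forall z, m <= z <= a1 -> g z + eta B z < 0).
  { intros B HB z Hz. destruct (Heta B z HB ltac:(lra)) as [H1 _].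
    apply abs_le in H1. specialize (Hneg z Hz). lra. }
  assert (Hex : forall B, exists z, B0 <= B -> a1 < z < M /\ g z + eta B z = 0).
  { intros B. destruct (Rle_dec B0 B) as [HB|HB]; [|exists 0; intros; contradiction].
    assert (Hc : forall x, a1 <= x <= M -> continuity_pt (fun x => g x + eta B x) x).
    { intros x Hx. apply derivable_continuous_pt.
      exists (g' x + Derive (eta B) x). apply is_derive_Reals. apply (HD B HB x Hx). }
    assert (Ha : g a1 + eta B a1 < 0) by (apply Hneg2; auto; lra).
    assert (HM : 0 < g M + eta B M).
    { destruct (Heta B M HB ltac:(lra)) as [H1 _]. apply abs_le in H1. lra. }
    destruct (Ranalysis5.IVT_interv (fun x => g x + eta B x) a1 M Hc ltac:(lra) Ha HM) as [z [Hz1 Hz2]].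
    simpl in Hz2. exists z. intros _. split; auto.
    destruct (Req_dec z a1). subst; lra. destruct (Req_dec z M). subst; lra. lra. }
  exists (fun B => proj1_sig (constructive_indefinite_description _ (Hex B))).
  intros B HB.
  destruct (constructive_indefinite_description _ (Hex B)) as [z Hz]. simpl.
  destruct (Hz HB) as [Hz1 Hz2].
  split; [auto|split; [auto|split; [apply Hmono; auto|split; [apply Hneg2; auto|split]]]].
  - intros y Hy Hy0.
    destruct (Rle_lt_dec y a1). { assert (g y + eta B y < 0) by (apply Hneg2; auto; lra). lra. }
    destruct (Rtotal_order y z) as [Hl|[Hl|Hl]]; auto.
    + assert (g y + eta B y < g z + eta B z) by (apply Hmono; auto; lra). lra.
    + assert (g z + eta B z < g y + eta B y) by (apply Hmono; auto; lra). lra.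
  - assert (Hsl : forall y w, a1 <= y -> y <= w -> w <= M -> cd * (w - y) <= g w - g y).
    { apply (slope g g' a1 M cd); intros x Hx; apply (Hder x Hx). }
    assert (g z = - eta B z) by lra.
    destruct (Rle_lt_dec z C).
    + specialize (Hsl z C ltac:(lra) r ltac:(lra)).
      rewrite Rabs_left1 by lra. rewrite HgC in Hsl.
      pose proof (Rle_abs (- eta B z)) as AA. rewrite Rabs_Ropp in AA. pose proof (Rle_abs (eta B z)). lra.
    + specialize (Hsl C z ltac:(lra) ltac:(lra) ltac:(lra)).
      rewrite Rabs_right by lra. rewrite HgC in Hsl.
      pose proof (Rle_abs (- eta B z)) as AA. rewrite Rabs_Ropp in AA. pose proof (Rle_abs (eta B z)). lra.
Qed.

Lemma Cpq_pos D K p q : 0 < Cpq D K p q.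
Proof. apply Rpower_pos. Qed.

Lemma Cpq_k D K p q (HD : 0 < D) (HK : 0 < K) (Hqp : q < 2*p) : Rpower (Cpq D K p q) (2*p - q) = K / D.
Proof.
  unfold Cpq, rexp. rewrite Rpower_mult, Rinv_l by lra.
  apply Rpower_1. apply Rdiv_lt_0_compat; auto.
Qed.

Lemma gl_fact D K p q x : gl D K p q x = Rpower x q * (D * Rpower x (2*p - q) - K).
Proof.
  unfold gl. replace (2*p) with (q + (2*p - q)) at 1 by ring.
  rewrite Rpower_plus. ring.
Qed.

Lemma gd_fact D K p q x : gd D K p q x = Rpower x (q - 1) * (2*p*D * Rpower x (2*p - q) - q*K).
Proof.
  unfold gd. replace (2*p - 1) with ((q - 1) + (2*p - q)) by ring.
  rewrite Rpower_plus. ring.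
Qed.

Lemma gl_C D K p q (HD : 0 < D) (HK : 0 < K) (Hqp : q < 2*p) : gl D K p q (Cpq D K p q) = 0.
Proof. rewrite gl_fact, Cpq_k by auto. field. lra. Qed.

Lemma gl_neg D K p q (HD : 0 < D) (HK : 0 < K) (Hq : 0 <= q) (Hqp : q < 2*p) a b x : 0 < a -> a <= x <= b -> b < Cpq D K p q ->
  gl D K p q x <= Rpower a q * (D * Rpower b (2*p - q) - K) /\
  Rpower a q * (D * Rpower b (2*p - q) - K) < 0.
Proof.
  intros Ha Hx Hb.
  assert (Hk : Rpower b (2*p-q) < K / D).
  { rewrite <- (Cpq_k D K p q) by auto. apply Rlt_Rpower_l; lra. }
  assert (Hk2 : D * Rpower b (2*p-q) - K < 0).
  { apply Rmult_lt_compat_l with (r := D) in Hk; auto.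
    replace (D * (K / D)) with K in Hk by (field; lra). lra. }
  assert (Hxb : Rpower x (2*p-q) <= Rpower b (2*p-q)) by (apply Rle_Rpower_l; lra).
  assert (Hxa : Rpower a q <= Rpower x q) by (apply Rle_Rpower_l; lra).
  pose proof (Rpower_pos a q). pose proof (Rpower_pos x q).
  rewrite gl_fact. split.
  - assert (Rpower x q * (D * Rpower x (2 * p - q) - K) <= Rpower x q * (D * Rpower b (2 * p - q) - K)).
    { apply Rmult_le_compat_l; nra. }
    assert (Rpower x q * (D * Rpower b (2 * p - q) - K) <= Rpower a q * (D * Rpower b (2 * p - q) - K)).
    { nra. }
    lra.
  - nra.
Qed.

Lemma gl_pos D K p q (HD : 0 < D) (HK : 0 < K) (Hq : 0 <= q) (Hqp : q < 2*p) a x :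
  Cpq D K p q < a -> a <= x ->
  Rpower a q * (D * Rpower a (2*p - q) - K) <= gl D K p q x /\
  0 < Rpower a q * (D * Rpower a (2*p - q) - K).
Proof.
  intros Ha Hx. pose proof (Cpq_pos D K p q).
  assert (Hk : K / D < Rpower a (2*p-q)).
  { rewrite <- (Cpq_k D K p q) by auto. apply Rlt_Rpower_l; lra. }
  assert (Hk2 : 0 < D * Rpower a (2*p-q) - K).
  { apply Rmult_lt_compat_l with (r := D) in Hk; auto.
    replace (D * (K / D)) with K in Hk by (field; lra). lra. }
  assert (Hxb : Rpower a (2*p-q) <= Rpower x (2*p-q)) by (apply Rle_Rpower_l; lra).
  assert (Hxa : Rpower a q <= Rpower x q) by (apply Rle_Rpower_l; lra).
  pose proof (Rpower_pos a q). pose proof (Rpower_pos x q).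
  assert (D * Rpower a (2*p-q) <= D * Rpower x (2*p-q)) by (apply Rmult_le_compat_l; lra).
  rewrite gl_fact. split.
  - apply Rmult_le_compat; lra.
  - apply Rmult_lt_0_compat; lra.
Qed.

Lemma rpow_lb a M c x : 0 < a -> a <= x <= M ->
  Rmin (Rpower a c) (Rpower M c) <= Rpower x c.
Proof.
  intros Ha Hx. destruct (Rle_lt_dec 0 c).
  - eapply Rle_trans; [apply Rmin_l|]. apply Rle_Rpower_l; lra.
  - eapply Rle_trans; [apply Rmin_r|].
    replace c with (- (- c)) by ring. rewrite (Rpower_Ropp M (-c)), (Rpower_Ropp x (-c)).
    apply Rinv_le_contravar. apply Rpower_pos. apply Rle_Rpower_l; lra.
Qed.

Lemma gd_lb D K p q (HD : 0 < D) (Hq : 0 <= q) (Hqp : q < 2*p) a1 M kap x :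
  0 < a1 -> 0 < kap -> kap <= 2*p*D * Rpower a1 (2*p - q) - q*K -> a1 <= x <= M ->
  Rmin (Rpower a1 (q-1)) (Rpower M (q-1)) * kap <= gd D K p q x.
Proof.
  intros Ha1 Hk Hkap Hx. rewrite gd_fact.
  pose proof (rpow_lb a1 M (q-1) x Ha1 Hx).
  assert (Rpower a1 (2*p-q) <= Rpower x (2*p-q)) by (apply Rle_Rpower_l; lra).
  assert (0 < Rmin (Rpower a1 (q-1)) (Rpower M (q-1))) by (apply Rmin_pos; apply Rpower_pos).
  assert (0 <= p) by lra.
  assert (2*p*D * Rpower a1 (2*p - q) <= 2*p*D * Rpower x (2*p - q)).
  { apply Rmult_le_compat_l; nra. }
  apply Rmult_le_compat; lra.
Qed.


Lemma sign_conv Delta D K p q B eps : 0 < B -> 0 < eps -> q < 2*p ->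
  Delta eps B = (gl D K p q (eps / Rpower B (- rexp p q))
     + eta_resc Delta D K p q B (eps / Rpower B (- rexp p q))) / Rpower B (2*p*rexp p q).
Proof.
  intros HB He Hqp.
  pose proof (Rpower_pos B (- rexp p q)) as Hs.
  pose proof (Rpower_pos B (2*p*rexp p q)) as HP.
  rewrite <- scale_id by (auto; apply Rdiv_lt_0_compat; auto).
  replace (eps / Rpower B (- rexp p q) * Rpower B (- rexp p q)) with eps by (field; lra).
  field. lra.
Qed.

Lemma case_i_A Delta D K p q (HD : 0 < D) (HK : 0 < K) (Hp : 1 <= p) (Hq : 0 <= q)
  (Hqp : q < 2 * p)
  (Heta : forall a b e, 0 < a -> a <= b -> 0 < e -> exists B0, forall B x,
       B0 <= B -> a <= x <= b ->
       Rabs (eta_resc Delta D K p q B x) <= e /\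
       ex_derive (eta_resc Delta D K p q B) x /\
       Rabs (Derive (eta_resc Delta D K p q B) x) <= e)
  m M (Hm : 0 < m) (HmC : m < Cpq D K p q) (HCM : Cpq D K p q < M) :
     exists (epsloc : R -> R) (B0 : R),
       (forall B, B0 <= B ->
          m * Rpower B (- rexp p q) <= epsloc B <= M * Rpower B (- rexp p q) /\
          sign_changing_crossing (fun eps => Delta eps B) (epsloc B) /\
          (forall e, m * Rpower B (- rexp p q) <= e <= M * Rpower B (- rexp p q) ->
             sign_changing_crossing (fun eps => Delta eps B) e -> e = epsloc B)) /\
       is_lim (fun B => epsloc B / (Cpq D K p q * Rpower B (- rexp p q))) p_infty 1 /\
       (forall eta, 0 < eta ->
          (forall a b, 0 < a -> a <= b -> exists Ce B1, forall B x,
              B1 <= B -> a <= x <= b ->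
              Rabs (eta_resc Delta D K p q B x) <= Ce * Rpower B (- eta) /\
              ex_derive (eta_resc Delta D K p q B) x /\
              Rabs (Derive (eta_resc Delta D K p q B) x) <= Ce * Rpower B (- eta)) ->
          exists Ce B1, forall B, B1 <= B ->
            Rabs (epsloc B / (Cpq D K p q * Rpower B (- rexp p q)) - 1)
              <= Ce * Rpower B (- eta)).
Proof.
  set (C := Cpq D K p q) in *.
  assert (HC : 0 < C) by apply Cpq_pos.
  set (k := 2*p - q).
  set (th := (2*p+q)/(4*p)).
  assert (Hth : 0 < th < 1).
  { unfold th. split. apply Rdiv_lt_0_compat; lra.
    apply Rmult_lt_reg_r with (r := 4*p); [lra|]. unfold Rdiv.
    rewrite Rmult_assoc, Rinv_l by lra. lra. }
  set (C' := Cpq D (th*K) p q).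
  assert (HC'k : Rpower C' k = th*K/D) by (apply Cpq_k; auto; nra).
  assert (HCk : Rpower C k = K/D) by (apply Cpq_k; auto).
  assert (HC'0 : 0 < C') by apply Cpq_pos.
  assert (HC'C : C' < C).
  { apply (Rpower_lt_base C' C k); auto. unfold k; lra. rewrite HC'k, HCk.
    unfold Rdiv. apply Rmult_lt_compat_r. apply Rinv_0_lt_compat; auto. nra. }
  set (a1 := Rmax m C').
  assert (Ha1m : m <= a1) by apply Rmax_l.
  assert (Ha1C' : C' <= a1) by apply Rmax_r.
  assert (Ha1C : a1 < C) by (apply Rmax_lub_lt; auto).
  set (kap := (2*p-q)*K/2).
  assert (Hkap0 : 0 < kap) by (unfold kap; nra).
  assert (Hkap : kap <= 2*p*D * Rpower a1 (2*p - q) - q*K).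
  { assert (Rpower C' k <= Rpower a1 k) by (apply Rle_Rpower_l; unfold k; lra).
    fold k. rewrite HC'k in H.
    assert (D * (th * K / D) <= D * Rpower a1 k) by (apply Rmult_le_compat_l; lra).
    replace (D * (th * K / D)) with (th*K) in H0 by (field; lra).
    unfold kap. unfold th in H0.
    replace ((2 * p + q) / (4 * p) * K) with ((2*p+q)*K/(4*p)) in H0 by (field; lra).
    assert (2*p*((2*p+q)*K/(4*p)) <= 2*p*(D * Rpower a1 k)) by (apply Rmult_le_compat_l; lra).
    replace (2*p*((2*p+q)*K/(4*p))) with ((2*p+q)*K/2) in H1 by (field; lra).
    lra. }
  set (cd := Rmin (Rpower a1 (q-1)) (Rpower M (q-1)) * kap).
  assert (Hcd : 0 < cd).
  { unfold cd. apply Rmult_lt_0_compat; auto. apply Rmin_pos; apply Rpower_pos. }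
  destruct (gl_neg D K p q HD HK Hq Hqp m a1 m Hm ltac:(lra) Ha1C) as [_ Hv1].
  set (v1 := Rpower m q * (D * Rpower a1 (2 * p - q) - K)) in *.
  destruct (gl_pos D K p q HD HK Hq Hqp M M HCM ltac:(lra)) as [HgM1 HgM2].
  set (c0 := Rmin (- v1) (gl D K p q M)).
  assert (Hc0 : 0 < c0) by (apply Rmin_pos; lra).
  destruct (Heta m M (Rmin c0 cd / 2) Hm ltac:(lra)
    ltac:(pose proof (Rmin_glb_lt c0 cd 0 Hc0 Hcd); lra)) as [B0' HB0'].
  set (B0 := Rmax B0' 1).
  destruct (core (gl D K p q) (gd D K p q) (eta_resc Delta D K p q) m a1 M C c0 cd B0)
    as [xB HxB]; auto; try lra.
  { intros x Hx. destruct (gl_neg D K p q HD HK Hq Hqp m a1 x Hm Hx Ha1C) as [H1 _].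
    fold v1 in H1. pose proof (Rmin_l (- v1) (gl D K p q M)). fold c0 in H. lra. }
  { intros x Hx. split. apply gl_derive; lra.
    apply gd_lb; auto; lra. }
  { apply gl_C; auto. }
  { apply Rmin_r. }
  { intros B x HB Hx. apply HB0'; auto. eapply Rle_trans; [apply Rmax_l|apply HB]. }
  assert (HB0pos : forall B, B0 <= B -> 0 < B).
  { intros B HB. pose proof (Rmax_r B0' 1). fold B0 in H. lra. }
  assert (Hratio : forall B, B0 <= B ->
     Rabs (xB B * Rpower B (- rexp p q) / (C * Rpower B (- rexp p q)) - 1)
       <= Rabs (eta_resc Delta D K p q B (xB B)) / (cd * C)).
  { intros B HB. pose proof (Rpower_pos B (- rexp p q)) as Hs.
    destruct (HxB B HB) as [_ [_ [_ [_ [_ Hb]]]]].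
    replace (xB B * Rpower B (- rexp p q) / (C * Rpower B (- rexp p q)) - 1)
      with ((xB B - C) / C) by (field; lra).
    unfold Rdiv. rewrite Rabs_mult, Rabs_inv, (Rabs_right C) by lra.
    rewrite Rinv_mult.
    apply Rmult_le_reg_l with (r := cd * C). nra.
    replace (cd * C * (Rabs (xB B - C) * / C)) with (cd * Rabs (xB B - C)) by (field; lra).
    replace (cd * C * (Rabs (eta_resc Delta D K p q B (xB B)) * (/ cd * / C)))
      with (Rabs (eta_resc Delta D K p q B (xB B))) by (field; lra).
    auto. }
  exists (fun B => xB B * Rpower B (- rexp p q)), B0.
  split; [|split].
  - intros B HB.
    pose proof (HB0pos B HB) as HBp.
    set (s := Rpower B (- rexp p q)).
    assert (Hs : 0 < s) by apply Rpower_pos.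
    pose proof (Rpower_pos B (2*p*rexp p q)) as HP.
    destruct (HxB B HB) as [Hx [Hz [Hmono [Hneg [Huniq _]]]]].
    set (h := fun x => gl D K p q x + eta_resc Delta D K p q B x) in *.
    assert (SC : forall t, 0 < t -> Delta t B = h (t / s) / Rpower B (2*p*rexp p q)).
    { intros t Ht. apply sign_conv; auto. }
    assert (Hdiv : forall u, u * s / s = u) by (intros; field; lra).
    split; [|split].
    + split; apply Rmult_le_compat_r; lra.
    + split.
      { simpl. rewrite SC by nra. rewrite Hdiv. unfold h. rewrite Hz. unfold Rdiv; ring. }
      set (w := Rmin (xB B - a1) (M - xB B)).
      assert (Hw1 : w <= xB B - a1) by apply Rmin_l.
      assert (Hw2 : w <= M - xB B) by apply Rmin_r.
      assert (Hw0 : 0 < w) by (apply Rmin_pos; lra).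
      exists (s * w). split. nra. left. split.
      * intros t Ht. simpl.
        assert (Ht0 : a1 * s < t) by nra.
        assert (Hu1 : a1 < t / s).
        { apply Rmult_lt_reg_r with (r := s); auto. unfold Rdiv. rewrite Rmult_assoc, Rinv_l; lra. }
        assert (Hu2 : t / s < xB B).
        { apply Rmult_lt_reg_r with (r := s); auto. unfold Rdiv. rewrite Rmult_assoc, Rinv_l; lra. }
        assert (h (t/s) < h (xB B)) by (apply Hmono; lra).
        rewrite SC by nra. unfold h in *. rewrite Hz in H.
        unfold Rdiv at 1. assert (0 < / Rpower B (2 * p * rexp p q)) by (apply Rinv_0_lt_compat; auto).
        nra.
      * intros t Ht. simpl.
        assert (Ht0 : t < M * s) by nra.
        assert (Hu1 : xB B < t / s).
        { apply Rmult_lt_reg_r with (r := s); auto. unfold Rdiv. rewrite Rmult_assoc, Rinv_l; lra. }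
        assert (Hu2 : t / s < M).
        { apply Rmult_lt_reg_r with (r := s); auto. unfold Rdiv. rewrite Rmult_assoc, Rinv_l; lra. }
        assert (h (xB B) < h (t/s)) by (apply Hmono; lra).
        rewrite SC by nra. unfold h in *. rewrite Hz in H.
        unfold Rdiv at 1. assert (0 < / Rpower B (2 * p * rexp p q)) by (apply Rinv_0_lt_compat; auto).
        nra.
    + intros e He [He0 _]. simpl in He0.
      assert (He1 : 0 < e) by nra.
      rewrite SC in He0 by auto.
      assert (Hh : h (e / s) = 0).
      { apply (Rmult_eq_compat_r (Rpower B (2 * p * rexp p q))) in He0.
        unfold Rdiv in He0. rewrite Rmult_assoc, Rinv_l, Rmult_1_r in He0 by lra. lra. }
      assert (Hu1 : m <= e / s).
      { apply Rmult_le_reg_r with (r := s); auto. unfold Rdiv. rewrite Rmult_assoc, Rinv_l; lra. }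
      assert (Hu2 : e / s <= M).
      { apply Rmult_le_reg_r with (r := s); auto. unfold Rdiv. rewrite Rmult_assoc, Rinv_l; lra. }
      rewrite <- (Huniq (e / s) ltac:(lra) Hh). field. lra.
  - apply is_lim_spec. intros ep. simpl.
    assert (Hep : 0 < ep*cd*C/2).
    { pose proof (cond_pos ep). assert (0 < ep * cd) by (apply Rmult_lt_0_compat; lra).
      assert (0 < ep * cd * C) by (apply Rmult_lt_0_compat; lra). lra. }
    destruct (Heta m M (ep*cd*C/2) Hm ltac:(lra) Hep) as [B1 HB1].
    exists (Rmax B0 B1). intros B HB.
    pose proof (Rmax_l B0 B1). pose proof (Rmax_r B0 B1).
    destruct (HxB B ltac:(lra)) as [Hx _].
    destruct (HB1 B (xB B) ltac:(lra) ltac:(lra)) as [He _].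
    eapply Rle_lt_trans; [apply Hratio; lra|].
    apply Rmult_lt_reg_r with (r := cd * C). nra.
    unfold Rdiv. rewrite Rmult_assoc, Rinv_l by nra.
    pose proof (cond_pos ep). nra.
  - intros eta Heta0 Hrate.
    destruct (Hrate m M Hm ltac:(lra)) as [Ce [B1 HB1]].
    exists (Ce / (cd * C)), (Rmax B0 B1). intros B HB.
    pose proof (Rmax_l B0 B1). pose proof (Rmax_r B0 B1).
    destruct (HxB B ltac:(lra)) as [Hx _].
    destruct (HB1 B (xB B) ltac:(lra) ltac:(lra)) as [He _].
    eapply Rle_trans; [apply Hratio; lra|].
    replace (Ce / (cd * C) * Rpower B (- eta)) with (Ce * Rpower B (- eta) / (cd * C)) by (field; nra).
    unfold Rdiv. apply Rmult_le_compat_r; auto.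
    apply Rlt_le, Rinv_0_lt_compat. nra.
Qed.

Lemma case_i_B Delta D K p q (HD : 0 < D) (HK : 0 < K) (Hp : 1 <= p) (Hq : 0 <= q)
  (Hqp : q < 2 * p)
  (Heta : forall a b e, 0 < a -> a <= b -> 0 < e -> exists B0, forall B x,
       B0 <= B -> a <= x <= b ->
       Rabs (eta_resc Delta D K p q B x) <= e /\
       ex_derive (eta_resc Delta D K p q B) x /\
       Rabs (Derive (eta_resc Delta D K p q B) x) <= e) :
   (forall Kset : R -> Prop, Rtopology.compact Kset ->
      (forall x, Kset x -> 0 < x) -> ~ Kset (Cpq D K p q) ->
      exists B0, forall B x, B0 <= B -> Kset x ->
        (x < Cpq D K p q -> Delta (x * Rpower B (- rexp p q)) B < 0) /\
        (Cpq D K p q < x -> 0 < Delta (x * Rpower B (- rexp p q)) B)).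
Proof.
  intros Ks Hcomp Hpos HnC.
  set (C := Cpq D K p q) in *.
  assert (HC : 0 < C) by apply Cpq_pos.
  destruct (Rtopology.compact_P1 Ks Hcomp) as [m0 [M0 Hbd]].
  pose proof (Rtopology.compact_P2 Ks Hcomp) as Hcl.
  destruct (Hcl 0 ltac:(intro H0; specialize (Hpos 0 H0); lra)) as [d0 Hd0].
  destruct (Hcl C HnC) as [d1 Hd1].
  assert (Hx0 : forall x, Ks x -> d0 <= x).
  { intros x Hx. destruct (Rlt_le_dec x d0) as [Hl|]; auto.
    exfalso. apply (Hd0 x); auto. unfold Rtopology.disc. specialize (Hpos x Hx).
    rewrite Rminus_0_r, Rabs_right; lra. }
  assert (Hx1 : forall x, Ks x -> d1 <= Rabs (x - C)).
  { intros x Hx. destruct (Rlt_le_dec (Rabs (x - C)) d1) as [Hl|]; auto.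
    exfalso. apply (Hd1 x); auto. }
  pose proof (cond_pos d0) as Hd0p. pose proof (cond_pos d1) as Hd1p.
  set (dl := Rmin d1 (C/2)).
  assert (Hdl1 : dl <= d1) by apply Rmin_l.
  assert (Hdl2 : dl <= C/2) by apply Rmin_r.
  assert (Hdl0 : 0 < dl) by (apply Rmin_pos; lra).
  destruct (gl_neg D K p q HD HK Hq Hqp (C - dl) (C - dl) (C - dl) ltac:(fold C; lra) ltac:(fold C; lra) ltac:(fold C; lra)) as [_ Hn].
  assert (Hfac : D * Rpower (C - dl) (2 * p - q) - K < 0).
  { pose proof (Rpower_pos (C - dl) q). nra. }
  set (v1 := Rpower d0 q * (D * Rpower (C - dl) (2 * p - q) - K)).
  assert (Hv1 : v1 < 0).
  { unfold v1. pose proof (Rpower_pos d0 q). nra. }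
  destruct (gl_pos D K p q HD HK Hq Hqp (C + dl) (C + dl) ltac:(fold C; lra) ltac:(fold C; lra)) as [_ Hv2].
  set (v2 := Rpower (C + dl) q * (D * Rpower (C + dl) (2 * p - q) - K)) in *.
  set (e := Rmin (- v1) v2 / 2).
  assert (He1 : e <= - v1 / 2) by (unfold e; pose proof (Rmin_l (- v1) v2); lra).
  assert (He2 : e <= v2 / 2) by (unfold e; pose proof (Rmin_r (- v1) v2); lra).
  assert (He0 : 0 < e) by (unfold e; pose proof (Rmin_pos (- v1) v2 ltac:(fold C; lra) Hv2); lra).
  destruct (Heta d0 (Rmax M0 d0) e Hd0p (Rmax_r M0 d0) He0) as [B0' HB0'].
  exists (Rmax B0' 1). intros B x HB Hx.
  pose proof (Rmax_l B0' 1). pose proof (Rmax_r B0' 1).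
  assert (HBp : 0 < B) by lra.
  pose proof (Hpos x Hx) as Hxp.
  pose proof (Hx0 x Hx) as Hxd0.
  pose proof (Hx1 x Hx) as Hxd1.
  assert (Hxb : x <= Rmax M0 d0) by (eapply Rle_trans; [apply (Hbd x Hx)|apply Rmax_l]).
  destruct (HB0' B x ltac:(fold C; lra) ltac:(fold C; lra)) as [Heb _].
  apply abs_le in Heb.
  set (s := Rpower B (- rexp p q)).
  assert (Hs : 0 < s) by apply Rpower_pos.
  pose proof (Rpower_pos B (2*p*rexp p q)) as HP.
  assert (SC : Delta (x * s) B = (gl D K p q x + eta_resc Delta D K p q B x) / Rpower B (2*p*rexp p q)).
  { rewrite (sign_conv Delta D K p q B (x*s)) by (auto; nra). fold s. replace (x * s / s) with x by (field; lra). auto. }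
  assert (HPi : 0 < / Rpower B (2 * p * rexp p q)) by (apply Rinv_0_lt_compat; auto).
  split; intros Hxc; rewrite SC; unfold Rdiv.
  - rewrite Rabs_left in Hxd1 by lra.
    destruct (gl_neg D K p q HD HK Hq Hqp d0 (C - dl) x Hd0p ltac:(fold C; lra) ltac:(fold C; lra)) as [Hg _].
    fold v1 in Hg. nra.
  - rewrite Rabs_right in Hxd1 by lra.
    destruct (gl_pos D K p q HD HK Hq Hqp (C + dl) x ltac:(fold C; lra) ltac:(fold C; lra)) as [Hg _].
    fold v2 in Hg. nra.
Qed.

Theorem theorem5
  (Delta : R -> R -> R) (D K p q db dv : R)
  (HD : 0 < D) (HK : 0 < K) (Hp : 1 <= p) (Hq : 0 <= q)
  (Hdb : 0 < db) (Hdv : 0 < dv)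
  (* R_p(eps,B) = O(eps^(2p+db)) + O(eps^(q+dv)/B) near eps = 0, uniformly in B *)
  (Hrem : exists e0 Cb Cv, 0 < e0 /\ forall B eps, 0 < B -> 0 < eps < e0 ->
      Rabs (remainder Delta D K p q eps B)
        <= Cb * Rpower eps (2 * p + db) + Cv * Rpower eps (q + dv) / B) :
  (* case (i) *)
  (q < 2 * p ->
   (* eta_B and its x-derivative -> 0 uniformly on compacts of (0,oo) *)
   (forall a b e, 0 < a -> a <= b -> 0 < e -> exists B0, forall B x,
       B0 <= B -> a <= x <= b ->
       Rabs (eta_resc Delta D K p q B x) <= e /\
       ex_derive (eta_resc Delta D K p q B) x /\
       Rabs (Derive (eta_resc Delta D K p q B) x) <= e) ->
   (forall m M, 0 < m -> m < Cpq D K p q -> Cpq D K p q < M ->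
     exists (epsloc : R -> R) (B0 : R),
       (forall B, B0 <= B ->
          m * Rpower B (- rexp p q) <= epsloc B <= M * Rpower B (- rexp p q) /\
          sign_changing_crossing (fun eps => Delta eps B) (epsloc B) /\
          (forall e, m * Rpower B (- rexp p q) <= e <= M * Rpower B (- rexp p q) ->
             sign_changing_crossing (fun eps => Delta eps B) e -> e = epsloc B)) /\
       is_lim (fun B => epsloc B / (Cpq D K p q * Rpower B (- rexp p q))) p_infty 1 /\
       (forall eta, 0 < eta ->
          (forall a b, 0 < a -> a <= b -> exists Ce B1, forall B x,
              B1 <= B -> a <= x <= b ->
              Rabs (eta_resc Delta D K p q B x) <= Ce * Rpower B (- eta) /\
              ex_derive (eta_resc Delta D K p q B) x /\
              Rabs (Derive (eta_resc Delta D K p q B) x) <= Ce * Rpower B (- eta)) ->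
          exists Ce B1, forall B, B1 <= B ->
            Rabs (epsloc B / (Cpq D K p q * Rpower B (- rexp p q)) - 1)
              <= Ce * Rpower B (- eta))) /\
   (forall Kset : R -> Prop, Rtopology.compact Kset ->
      (forall x, Kset x -> 0 < x) -> ~ Kset (Cpq D K p q) ->
      exists B0, forall B x, B0 <= B -> Kset x ->
        (x < Cpq D K p q -> Delta (x * Rpower B (- rexp p q)) B < 0) /\
        (Cpq D K p q < x -> 0 < Delta (x * Rpower B (- rexp p q)) B)))
  /\
  (* case (ii) *)
  (q = 2 * p ->
   (forall B, 0 < B ->
      filterlim (fun eps => (Delta eps B - (D - K / B) * Rpower eps (2 * p))
                          / Rpower eps (2 * p)) (at_right 0) (locally 0)) /\
   (forall B, K / D < B ->
      exists e0, 0 < e0 /\ forall eps, 0 < eps < e0 -> 0 < Delta eps B) /\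
   (forall B, 0 < B -> B < K / D ->
      exists e0, 0 < e0 /\ forall eps, 0 < eps < e0 -> Delta eps B < 0))
  /\
  (* case (iii) *)
  (2 * p < q ->
   exists B0, forall B, B0 <= B ->
     exists e0, 0 < e0 /\ forall eps, 0 < eps < e0 -> 0 < Delta eps B).
Proof.
  split; [|split].
  - intros Hqp Heta. split.
    + intros m M Hm HmC HCM. apply case_i_A; auto.
    + apply case_i_B; auto.
  - apply (case_ii Delta D K p q db dv); auto.
  - apply (case_iii Delta D K p q db dv); auto.
Qed.
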